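(* Fix a predicate $P:\{-1,+1\}^k\to\{0,1\}$, $\varepsilon\ge0$ and $0\le\delta\le1$. Suppose $M$ is an $(\varepsilon,\delta)$-differentially private algorithm that maps CSP instances with respect to $P$ on $n$ variables to assignments in $\{\pm1\}^n$. Then there exists a CSP instance $\Phi$ with respect to $P$ such that $$\mathbb E[\mathrm{val}_\Phi(M(\Phi))]\ \le\ 1+\delta-e^{-\varepsilon}(1-\mu(P)).$$ In particular, when $\varepsilon\le1$ and $\delta=0$, $\mathbb E[\mathrm{val}_\Phi(M(\Phi))]\le\mu(P)+O(\varepsilon)$; and when $\varepsilon\gg1$ and $\delta=0$, $\mathbb E[\mathrm{val}_\Phi(M(\Phi))]\le1-e^{-\varepsilon}$ (up to the term $e^{-\varepsilon}\mu(P)$, i.e. $1-\Theta(e^{-\varepsilon})$).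
   Context: A CSP instance with respect to $P$ over variables $x_1,\dots,x_n$ is a multiset of $P$-constraints $(c,S)$, where $S\in[n]^k$ is the scope and $c\in\{-1,1\}^k$ is the negation pattern; $(c,S)$ is satisfied by $x$ iff $P(c_1x_{S_1},\dots,c_kx_{S_k})=1$. $\mathrm{val}_\Phi(x)$ is the fraction of constraints of $\Phi$ satisfied by $x$. $\mu(P)$ is the probability that $P$ is satisfied by a uniformly random input. Two instances are neighboring if one is obtained from the other by adding or removing one constraint; $M$ is $(\varepsilon,\delta)$-DP if $\Pr[M(\Phi)\in T]\le e^\varepsilon\Pr[M(\Phi')\in T]+\delta$ for all neighboring $\Phi,\Phi'$ and all output sets $T$. *)

(* Defs.v *)
From mathcomp Require Import all_boot all_order all_algebra.
From mathcomp Require Import reals.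
From mathcomp Require Import sequences exp.
Set Implicit Arguments. Unset Strict Implicit. Unset Printing Implicit Defensive.
Import Order.TTheory GRing.Theory Num.Theory.
Local Open Scope ring_scope.

(* Signs {-1,+1} are encoded by bool via b |-> (-1)^b  (false = +1, true = -1);
   product of signs is then xor (addb). *)
Definition sign := bool.

Definition pred_k (k : nat) := {ffun {ffun 'I_k -> sign} -> bool}.

Definition assignment (n : nat) := {ffun 'I_n -> sign}.

(* A P-constraint (c, S): negation pattern c in {-1,1}^k and scope S in [n]^k. *)
Definition constraint (k n : nat) := ({ffun 'I_k -> sign} * {ffun 'I_k -> 'I_n})%type.

Definition satisfies (k n : nat) (P : pred_k k) (C : constraint k n)
    (x : assignment n) : bool :=
  P [ffun i => addb (C.1 i) (x (C.2 i))].

(* A CSP instance is a multiset of constraints, i.e. a multiplicity function. *)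
Definition instance (k n : nat) := {ffun constraint k n -> nat}.

Definition inst_size (k n : nat) (Phi : instance k n) : nat :=
  (\sum_(C : constraint k n) Phi C)%N.

Definition val (R : realType) (k n : nat) (P : pred_k k) (Phi : instance k n)
    (x : assignment n) : R :=
  (\sum_(C : constraint k n) (Phi C * satisfies P C x))%N%:R / (inst_size Phi)%:R.

Definition mu (R : realType) (k : nat) (P : pred_k k) : R :=
  #|[set y | P y]|%:R / (2 ^ k)%:R.

Definition add_constraint (k n : nat) (Phi : instance k n) (C : constraint k n)
    : instance k n := [ffun D => (Phi D + (D == C))%N].

Definition neighboring (k n : nat) (Phi Phi' : instance k n) : Prop :=
  exists C, Phi' = add_constraint Phi C \/ Phi = add_constraint Phi' C.

Definition is_distr (R : realType) (n : nat) (p : {ffun assignment n -> R}) : Prop :=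
  (forall x, 0 <= p x) /\ \sum_x p x = 1.

Definition prob (R : realType) (n : nat) (p : {ffun assignment n -> R})
    (T : {set assignment n}) : R := \sum_(x in T) p x.

Definition mechanism (R : realType) (k n : nat) :=
  instance k n -> {ffun assignment n -> R}.

Definition is_mechanism (R : realType) (k n : nat) (M : mechanism R k n) : Prop :=
  forall Phi, is_distr (M Phi).

Definition DP (R : realType) (k n : nat) (eps delta : R) (M : mechanism R k n) : Prop :=
  forall Phi Phi', neighboring Phi Phi' ->
    forall T : {set assignment n},
      prob (M Phi) T <= expR eps * prob (M Phi') T + delta.

Definition expected_val (R : realType) (k n : nat) (P : pred_k k)
    (M : mechanism R k n) (Phi : instance k n) : R :=
  \sum_x M Phi x * val R P Phi x.

(* Main.v *)
Require Import Defs.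
From mathcomp Require Import all_boot all_order all_algebra.
From mathcomp Require Import reals.
From mathcomp Require Import sequences exp.
From mathcomp Require Import ring lra.
Import Order.TTheory GRing.Theory Num.Theory.
Local Open Scope ring_scope.

Section Aux.
Variables (R : realType) (k n : nat) (P : pred_k k).

Definition Phi0 : instance k n := [ffun _ => 0%N].

Lemma size_single (C : constraint k n) : inst_size (add_constraint Phi0 C) = 1%N.
Proof.
rewrite /inst_size (bigD1 C) //= !ffunE eqxx big1 // => D /negbTE HD.
by rewrite !ffunE HD.
Qed.

Lemma val_single (C : constraint k n) x :
  Defs.val R P (add_constraint Phi0 C) x = (satisfies P C x)%:R.
Proof.
rewrite /Defs.val size_single divr1 (bigD1 C) //= !ffunE eqxx big1 ?addn0 ?mul1n //.
by move=> D /negbTE HD; rewrite !ffunE HD.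
Qed.

Lemma sum_sat (S : {ffun 'I_k -> 'I_n}) (x : assignment n) :
  \sum_(c : {ffun 'I_k -> sign}) ((satisfies P (c, S) x)%:R : R)
  = \sum_y ((P y)%:R : R).
Proof.
pose h (c : {ffun 'I_k -> sign}) : {ffun 'I_k -> sign} :=
  [ffun i => addb (c i) (x (S i))].
have hK : involutive h by move=> c; apply/ffunP => i; rewrite !ffunE addbK.
rewrite (reindex_inj (inv_inj hK)) /=; apply: eq_bigr => c _.
by rewrite /satisfies /= -/(h (h c)) hK.
Qed.

Lemma prob_unsat (p : {ffun assignment n -> R}) (C : constraint k n) :
  is_distr p ->
  prob p [set x | ~~ satisfies P C x]
  = 1 - \sum_x p x * (satisfies P C x)%:R.
Proof.
case=> _ H1; rewrite /prob big_mkcond /= -[X in X - _]H1 -sumrB; apply: eq_bigr => x _.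
by rewrite inE; case: (satisfies _ _ _) => /=; rewrite ?mulr1 ?mulr0 ?subrr ?subr0.
Qed.

End Aux.

Theorem theorem6p1 (R : realType) (k n : nat) (P : pred_k k) (eps delta : R)
  (M : mechanism R k n) :
  (0 < n)%N -> 0 <= eps -> 0 <= delta -> delta <= 1 ->
  is_mechanism M -> DP eps delta M ->
  exists Phi : instance k n,
    (0 < inst_size Phi)%N /\
    expected_val P M Phi <= 1 + delta - expR (- eps) * (1 - mu R P).
Proof.
move=> n0 eps0 d0 d1 HM HDP.
pose S0 : {ffun 'I_k -> 'I_n} := [ffun _ => Ordinal n0].
pose Phic (c : {ffun 'I_k -> sign}) := add_constraint (@Phi0 k n) (c, S0).
pose B := 1 + delta - expR (- eps) * (1 - mu R P).
have evE c : expected_val P M (Phic c) = \sum_x M (Phic c) x * (satisfies P (c, S0) x)%:R.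
  by apply: eq_bigr => x _; rewrite val_single.
case: (boolP [exists c, expected_val P M (Phic c) <= B]).
  case/existsP => c Hc; exists (Phic c); split => //.
  by rewrite size_single.
rewrite negb_exists => /forallP Hall.
pose A := \sum_y ((P y)%:R : R).
pose N := ((2 ^ k)%N%:R : R).
have cardF : #|{ffun 'I_k -> sign}| = (2 ^ k)%N by rewrite card_ffun card_bool card_ord.
have N0 : 0 < N by rewrite ltr0n expn_gt0.
have muE : mu R P = A / N.
  rewrite /mu /A /N; congr (_ / _).
  rewrite -sum1_card big_mkcond /= natr_sum; apply: eq_bigr => y _.
  by rewrite inE; case: (P y).
pose E := expR eps.
have E0 : 0 < E := expR_gt0 eps.
have E1 : 1 <= E by have := expR_ge1Dx eps; rewrite /E; lra.
have L : \sum_c prob (M (@Phi0 k n)) [set x | ~~ satisfies P (c, S0) x] = N - A.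
  rewrite (eq_bigr (fun c => 1 - \sum_x M (@Phi0 k n) x * (satisfies P (c, S0) x)%:R));
    last by move=> c _; rewrite prob_unsat.
  rewrite sumrB sumr_const cardF exchange_big /=.
  rewrite (eq_bigr (fun x => M (@Phi0 k n) x * A)); last first.
    by move=> x _; rewrite -mulr_sumr sum_sat.
  by rewrite -mulr_suml (HM (@Phi0 k n)).2 mul1r.
have U : \sum_c prob (M (@Phi0 k n)) [set x | ~~ satisfies P (c, S0) x]
   <= \sum_c (E * (1 - expected_val P M (Phic c)) + delta).
  apply: ler_sum => c _.
  rewrite evE -prob_unsat; last exact: HM.
  apply: HDP; exists (c, S0); by left.
have V : \sum_c (1 - expected_val P M (Phic c)) < \sum_(c : {ffun 'I_k -> sign}) (1 - B).
  apply: ltr_sum.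
    by apply/hasP; exists [ffun => false]; rewrite ?mem_index_enum.
  move=> c _; have := Hall c; rewrite -ltNge; lra.
move: U; rewrite L big_split /= -mulr_sumr !sumr_const cardF => U.
move: V; rewrite sumr_const cardF => V.
have key : E * ((1 - B) *+ 2 ^ k) = N - A - E * N * delta.
  rewrite /B expRN -/E muE -mulr_natr -/N; field.
  by rewrite lt0r_neq0 //; rewrite gt_eqF.
have : E * \sum_c (1 - expected_val P M (Phic c)) < E * ((1 - B) *+ 2 ^ k).
  by rewrite ltr_pM2l.
rewrite key; move: U; rewrite -mulr_natr -/N => U W.
have H : 0 <= E * N * delta - delta * N.
  have -> : E * N * delta - delta * N = N * delta * (E - 1) by ring.
  by rewrite mulr_ge0 ?mulr_ge0 ?subr_ge0 // ltW.
have U' : N - A <= E * \sum_c (1 - expected_val P M (Phic c)) + delta * N := U.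
exfalso; move: U' W H; generalize (\sum_c (1 - expected_val P M (Phic c))) => S; clearbody E N; move: (E * S) (E * N * delta) (delta * N) => a b c; lra.
Qed.
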